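(* Consider any quantum secret sharing (QSS) scheme on $n$ parties whose access structure $\Gamma$ (the collection of authorized sets) is non-empty. Let $t_{\min}$ be the minimum integer $t$ such that every set of $t$ or more parties is authorized, and let $z_{\max}$ be the maximum integer $z$ such that every set of $z$ or fewer parties is unauthorized. Then $n\leq t_{\min}+z_{\max}$. If the QSS scheme is a pure state QSS scheme, then $n=t_{\min}+z_{\max}$.
   Context: A QSS scheme on $n$ parties is an encoding of a quantum secret into a joint state of $n$ subsystems (shares), the $j$-th share being given to party $j\in[n]=\{1,\dots,n\}$. A set $P\subseteq[n]$ of parties is authorized if the secret can be recovered from the shares of the parties in $P$, and unauthorized if the shares of the parties in $P$ contain no information about the secret. The access structure $\Gamma$ is the collection of authorized sets and the adversary structure the collection of unauthorized sets; these are disjoint, and a set may be neither (intermediate). A QSS scheme is a pure state QSS scheme if every pure state secret is encoded into a pure state of the $n$ shares. *)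

(* Defs.v *)
From HB Require Import structures.
From mathcomp Require Import all_boot all_order all_algebra.
Set Implicit Arguments. Unset Strict Implicit. Unset Printing Implicit Defensive.
Import Order.TTheory GRing.Theory Num.Theory.
Local Open Scope ring_scope.

Section Quantum.
Variable C : numClosedFieldType.

Definition op (I J : finType) := I -> J -> C.
Arguments op : clear implicits.

Definition mulop (I J K : finType) (A : op I J) (B : op J K) : op I K :=
  fun i k => \sum_(j : J) A i j * B j k.

Definition adjop (I J : finType) (A : op I J) : op J I :=
  fun j i => (A i j)^*.

Definition trop (I : finType) (A : op I I) : C := \sum_(i : I) A i i.

Definition psd (I : finType) (A : op I I) : Prop :=
  forall v : I -> C, 0 <= \sum_(i : I) \sum_(j : I) (v i)^* * A i j * v j.

Definition density (I : finType) (rho : op I I) : Prop :=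
  psd rho /\ trop rho = 1.

Definition pure_state (I : finType) (rho : op I I) : Prop :=
  density rho /\ exists v : I -> C, forall i j, rho i j = v i * (v j)^*.

(* quantum channel (CPTP map) in operator-sum (Kraus) form *)
Definition channel (I J : finType) (Phi : op I I -> op J J) : Prop :=
  exists (m : nat) (K : 'I_m -> op J I),
    (forall i i' : I, \sum_(k < m) mulop (adjop (K k)) (K k) i i' = (i == i')%:R)
    /\ forall (X : op I I) (a b : J),
         Phi X a b = \sum_(k < m) mulop (mulop (K k) X) (adjop (K k)) a b.

(* n parties; party j holds a share with (finite) basis S j *)
Variable n : nat.
Variable S : 'I_n -> finType.

(* basis of the joint system of all n shares *)
Definition joint := {dffun forall j : 'I_n, S j}.

(* basis of the joint system of the shares of the parties in P *)
Definition red (P : {set 'I_n}) := {dffun forall j : {j : 'I_n | j \in P}, S (val j)}.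

Definition restr (P : {set 'I_n}) (x : joint) : red P :=
  [ffun j : {j : 'I_n | j \in P} => x (val j)].

Definition ptrace (P : {set 'I_n}) (X : op joint joint) : op (red P) (red P) :=
  fun a b => \sum_(x : joint) \sum_(y : joint)
    (if [&& restr P x == a, restr P y == b &
          [forall j : 'I_n, (j \notin P) ==> (x j == y j)]]
     then X x y else 0).

Arguments ptrace P X : clear implicits.
Variable Sec : finType. (* basis of the secret system *)
Variable E : op Sec Sec -> op joint joint.

Definition authorized (P : {set 'I_n}) : Prop :=
  exists D : op (red P) (red P) -> op Sec Sec, channel D /\
    forall rho : op Sec Sec, density rho ->
      forall a b : Sec, D (ptrace P (E rho)) a b = rho a b.

Definition unauthorized (P : {set 'I_n}) : Prop :=
  forall rho sigma : op Sec Sec, density rho -> density sigma ->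
    forall a b : red P, ptrace P (E rho) a b = ptrace P (E sigma) a b.

Definition pure_scheme : Prop :=
  forall rho : op Sec Sec, pure_state rho -> pure_state (E rho).

End Quantum.

(* Main.v *)
Require Import Defs.
From HB Require Import structures.
From mathcomp Require Import all_boot all_order all_algebra.
Import Order.TTheory GRing.Theory Num.Theory.
Local Open Scope ring_scope.
From mathcomp Require Import ring.


Set Implicit Arguments. Unset Strict Implicit. Unset Printing Implicit Defensive.

Section Mx.
Variable C : numClosedFieldType.

Definition adj m n (A : 'M[C]_(m, n)) : 'M[C]_(n, m) := \matrix_(i, j) (A j i)^*.

Lemma adjE m n (A : 'M[C]_(m, n)) i j : adj A i j = (A j i)^*.
Proof. by rewrite mxE. Qed.

Lemma adjK m n (A : 'M[C]_(m, n)) : adj (adj A) = A.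
Proof. by apply/matrixP => i j; rewrite !mxE conjCK. Qed.

Lemma adj_mul m n p (A : 'M[C]_(m, n)) (B : 'M[C]_(n, p)) :
  adj (A *m B) = adj B *m adj A.
Proof.
apply/matrixP => i j; rewrite !mxE rmorph_sum; apply: eq_bigr => k _.
by rewrite !mxE rmorphM mulrC.
Qed.

Lemma adjD m n (A B : 'M[C]_(m, n)) : adj (A + B) = adj A + adj B.
Proof. by apply/matrixP => i j; rewrite !mxE rmorphD. Qed.

Lemma adjN m n (A : 'M[C]_(m, n)) : adj (- A) = - adj A.
Proof. by apply/matrixP => i j; rewrite !mxE rmorphN. Qed.

Lemma adjB m n (A B : 'M[C]_(m, n)) : adj (A - B) = adj A - adj B.
Proof. by rewrite adjD adjN. Qed.

Lemma adjZ m n c (A : 'M[C]_(m, n)) : adj (c *: A) = c^* *: adj A.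
Proof. by apply/matrixP => i j; rewrite !mxE rmorphM. Qed.

Lemma adj0 m n : adj (0 : 'M[C]_(m, n)) = 0.
Proof. by apply/matrixP => i j; rewrite !mxE rmorph0. Qed.

Lemma adj_sum m n (I : finType) (F : I -> 'M[C]_(m, n)) :
  adj (\sum_i F i) = \sum_i adj (F i).
Proof.
apply/matrixP => i j; rewrite !mxE !summxE rmorph_sum.
by apply: eq_bigr => k _; rewrite mxE.
Qed.

Lemma adj_scalar n c : adj (c%:M : 'M[C]_n) = (c^*)%:M.
Proof.
by apply/matrixP => i j; rewrite !mxE rmorphMn eq_sym.
Qed.

Lemma adj_delta m n (i : 'I_m) (j : 'I_n) : adj (delta_mx i j : 'M[C]_(m, n)) = delta_mx j i.
Proof.
by apply/matrixP => a b; rewrite !mxE rmorph_nat andbC.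
Qed.

Definition sc n (A : 'M[C]_n) := exists c, A = c%:M.

Lemma sc_scalar n c : sc (c%:M : 'M[C]_n). Proof. by exists c. Qed.
Lemma sc0 n : sc (0 : 'M[C]_n). Proof. by exists 0; rewrite raddf0. Qed.
Lemma scD n (A B : 'M[C]_n) : sc A -> sc B -> sc (A + B).
Proof. by move=> [a ->] [b ->]; exists (a + b); rewrite raddfD. Qed.
Lemma scN n (A : 'M[C]_n) : sc A -> sc (- A).
Proof. by move=> [a ->]; exists (- a); rewrite raddfN. Qed.
Lemma scB n (A B : 'M[C]_n) : sc A -> sc B -> sc (A - B).
Proof. by move=> hA hB; apply: scD => //; apply: scN. Qed.
Lemma scZ n c (A : 'M[C]_n) : sc A -> sc (c *: A).
Proof. by move=> [a ->]; exists (c * a); rewrite scale_scalar_mx. Qed.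
Lemma sc_sum n (I : finType) (F : I -> 'M[C]_n) : (forall i, sc (F i)) -> sc (\sum_i F i).
Proof.
move=> H; elim/big_ind: _ => //; first exact: sc0.
by move=> x y; apply: scD.
Qed.
Lemma scM n (A B : 'M[C]_n) : sc A -> sc B -> sc (A *m B).
Proof. by move=> [a ->] [b ->]; exists (a * b); rewrite scalar_mxM. Qed.
Lemma sc_adj n (A : 'M[C]_n) : sc A -> sc (adj A).
Proof. by move=> [a ->]; rewrite adj_scalar; apply: sc_scalar. Qed.
Lemma scE n (A : 'M[C]_n) (i0 : 'I_n) : sc A -> A = (A i0 i0)%:M.
Proof. by move=> [a ->]; rewrite mxE eqxx mulr1n. Qed.

Lemma adj_self_eq0 m n (A : 'M[C]_(m, n)) : adj A *m A = 0 -> A = 0.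
Proof.
move=> H; apply/matrixP => i j.
have := congr1 (fun M : 'M[C]_n => M j j) H; rewrite !mxE => /eqP.
rewrite psumr_eq0 => [/allP Hall|k _]; last by rewrite mxE mulrC mul_conjC_ge0.
have := Hall i (mem_index_enum _); rewrite mxE /= => /eqP.
by rewrite mulrC => /eqP; rewrite mul_conjC_eq0 => /eqP.
Qed.

Lemma entry_delta m n (X : 'M[C]_(m, n)) x y :
  (delta_mx 0 x *m X *m delta_mx y 0 : 'M[C]_1) 0 0 = X x y.
Proof.
rewrite -rowE -colE !mxE //.
Qed.

Lemma col_delta m n (X : 'M[C]_(m, n)) y a :
  (X *m delta_mx y 0 : 'cV[C]_m) a 0 = X a y.
Proof. by rewrite -colE mxE. Qed.

Lemma outer_entry m (u : 'cV[C]_m) a b : (u *m adj u) a b = u a 0 * (u b 0)^*.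
Proof. by rewrite mxE big_ord1 mxE. Qed.

Lemma inner_entry m (u w : 'cV[C]_m) : (adj u *m w) 0 0 = \sum_i (u i 0)^* * w i 0.
Proof. by rewrite mxE; apply: eq_bigr => i _; rewrite mxE. Qed.

Lemma inner_ge0 m (u : 'cV[C]_m) : 0 <= (adj u *m u) 0 0.
Proof. by rewrite inner_entry sumr_ge0 // => i _; rewrite mulrC mul_conjC_ge0. Qed.

End Mx.
Section KrausId.
Variable C : numClosedFieldType.

Lemma quad_eq m n (M : 'M[C]_(m, n)) (v : 'cV[C]_n) :
  M *m (v *m adj v) *m adj M = (M *m v) *m adj (M *m v).
Proof. by rewrite adj_mul !mulmxA. Qed.

Lemma delta_inner s (x : 'I_s) : (adj (delta_mx x 0 : 'cV[C]_s) *m (delta_mx x 0 : 'cV[C]_s)) 0 0 = 1.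
Proof. by rewrite adj_delta mul_delta_mx mxE !eqxx. Qed.

Lemma delta_inner2 s (x y : 'I_s) : x != y ->
  (adj (delta_mx x 0 + delta_mx y 0 : 'cV[C]_s) *m (delta_mx x 0 + delta_mx y 0 : 'cV[C]_s)) 0 0 = 2.
Proof.
move=> nxy; rewrite adjD !adj_delta mulmxDl !mulmxDr !mul_delta_mx.
rewrite mul_delta_mx_0 // mul_delta_mx_0 1?eq_sym //.
by rewrite !mxE !eqxx /= addr0 add0r.
Qed.

Lemma kraus_id_bridge s (I : finType) (M : I -> 'M[C]_s) :
  (forall (c : C) (v : 'cV[C]_s), 0 <= c -> c * (adj v *m v) 0 0 = 1 ->
     \sum_i M i *m (c *: (v *m adj v)) *m adj (M i) = c *: (v *m adj v)) ->
  forall v : 'cV[C]_s, (adj v *m v) 0 0 != 0 ->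
     \sum_i M i *m (v *m adj v) *m adj (M i) = v *m adj v.
Proof.
move=> H v nz.
have c0 : 0 <= ((adj v *m v) 0 0)^-1 by rewrite invr_ge0 inner_ge0.
have := H _ v c0 (mulVf nz).
under eq_bigr do rewrite -scalemxAr -scalemxAl.
rewrite -scaler_sumr => /(congr1 (fun X => (adj v *m v) 0 0 *: X)).
by rewrite !scalerA mulfV // !scale1r.
Qed.

Lemma kraus_id s (i0 : 'I_s) (I : finType) (M : I -> 'M[C]_s) :
  (forall v : 'cV[C]_s, (adj v *m v) 0 0 != 0 ->
     \sum_i M i *m (v *m adj v) *m adj (M i) = v *m adj v) ->
  forall i, M i = (M i i0 i0)%:M.
Proof.
move=> H.
have H1 : forall x a b, \sum_i M i a x * (M i b x)^* = ((a == x) && (b == x))%:R.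
  move=> x a b.
  have := H (delta_mx x 0); rewrite delta_inner oner_neq0 => /(_ isT).
  move=> /(congr1 (fun X : 'M[C]_s => X a b)); rewrite summxE outer_entry !mxE !eqxx !andbT rmorph_nat -natrM mulnb.
  move=> <-; apply: eq_bigr => i _.
  by rewrite quad_eq outer_entry !col_delta.
have Hoff : forall x y i, x != y -> M i y x = 0.
  move=> x y i nxy.
  have := H1 x y y; rewrite eq_sym (negbTE nxy) /=.
  move=> /psumr_eq0P Hz.
  have := Hz (fun i _ => mul_conjC_ge0 _) i isT.
  by move/eqP; rewrite mul_conjC_eq0 => /eqP.
have H2 : forall x y, x != y -> \sum_i M i x x * (M i y y)^* = 1.
  move=> x y nxy.
  have := H (delta_mx x 0 + delta_mx y 0).
  rewrite delta_inner2 // pnatr_eq0 /= => /(_ isT).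
  move=> /(congr1 (fun X : 'M[C]_s => X x y)); rewrite summxE outer_entry !mxE !eqxx.
  rewrite (negbTE nxy) eq_sym (negbTE nxy) /= rmorphD /= !rmorph_nat addr0 add0r mulr1.
  move=> E; etransitivity; last exact: E.
  apply: eq_bigr => i _.
  rewrite quad_eq outer_entry mulmxDr -!colE !mxE.
  by rewrite (Hoff y x) 1?eq_sym // (Hoff x y) // addr0 add0r.
have Hdiag : forall x y i, x != y -> M i x x = M i y y.
  move=> x y i nxy.
  have Hs : \sum_j (M j x x - M j y y) * (M j x x - M j y y)^* = 0.
    have E : forall j, (M j x x - M j y y) * (M j x x - M j y y)^* =
      M j x x * (M j x x)^* - M j x x * (M j y y)^* - (M j x x * (M j y y)^*)^*
      + M j y y * (M j y y)^*.
      move=> j; rewrite [(M j x x * _)^*]rmorphM /= conjCK rmorphB /=; ring.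
    under eq_bigr do rewrite E.
    rewrite !big_split /= !sumrN -rmorph_sum.
    have := H1 x x x; rewrite eqxx /= => ->.
    have := H1 y y y; rewrite eqxx /= => ->.
    rewrite (H2 x y nxy) rmorph1.
    by rewrite conjC1 subrr sub0r addrC subrr.
  have := psumr_eq0P (fun j _ => mul_conjC_ge0 _) Hs (i := i) isT.
  by move/eqP; rewrite mul_conjC_eq0 subr_eq0 => /eqP.
move=> i; apply/matrixP => a b; rewrite !mxE.
case: (eqVneq a b) => [<-|nab].
  by rewrite mulr1n; case: (eqVneq a i0) => [->//|ne]; apply: Hdiag.
by rewrite mulr0n (Hoff b a) // eq_sym.
Qed.

End KrausId.
Section Trc.
Variable C : numClosedFieldType.

Lemma addE m n (A B : 'M[C]_(m, n)) i j : (A + B) i j = A i j + B i j.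
Proof. by rewrite mxE. Qed.
Lemma sclE m n c (A : 'M[C]_(m, n)) i j : (c *: A) i j = c * A i j.
Proof. by rewrite mxE. Qed.

Lemma tr_quad s (X : 'M[C]_s) (v : 'cV[C]_s) :
  \tr (X *m (v *m adj v)) = (adj v *m X *m v) 0 0.
Proof.
by rewrite mulmxA mxtrace_mulC mulmxA /mxtrace big_ord1.
Qed.

Lemma trc_bridge s (X : 'M[C]_s) (k : C) :
  (forall (c : C) (v : 'cV[C]_s), 0 <= c -> c * (adj v *m v) 0 0 = 1 ->
     \tr (X *m (c *: (v *m adj v))) = k) ->
  forall v : 'cV[C]_s, (adj v *m v) 0 0 != 0 ->
     \tr (X *m (v *m adj v)) = k * (adj v *m v) 0 0.
Proof.
move=> H v nz.
have c0 : 0 <= ((adj v *m v) 0 0)^-1 by rewrite invr_ge0 inner_ge0.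
have := H _ v c0 (mulVf nz).
rewrite -scalemxAr mxtraceZ => <-.
by rewrite mulrAC mulVf // mul1r.
Qed.

Lemma trc s (X : 'M[C]_s) (k : C) :
  (forall v : 'cV[C]_s, (adj v *m v) 0 0 != 0 ->
     \tr (X *m (v *m adj v)) = k * (adj v *m v) 0 0) ->
  X = k%:M.
Proof.
move=> H.
have Hd : forall x, X x x = k.
  move=> x; have := H (delta_mx x 0); rewrite delta_inner oner_neq0 => /(_ isT).
  by rewrite tr_quad adj_delta entry_delta mulr1.
have Hs : forall x y, x != y -> X x y + X y x = 0.
  move=> x y nxy; have := H (delta_mx x 0 + delta_mx y 0).
  rewrite delta_inner2 // pnatr_eq0 /= => /(_ isT).
  rewrite tr_quad adjD !adj_delta !(mulmxDl, mulmxDr, addE).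
  rewrite !entry_delta !Hd => /eqP.
  rewrite -subr_eq0 => /eqP E; rewrite -{}[RHS]E; ring.
have Hi : forall x y, x != y -> X x y - X y x = 0.
  move=> x y nxy.
  pose v : 'cV[C]_s := delta_mx x 0 + 'i *: delta_mx y 0.
  have Nv : (adj v *m v) 0 0 = 2.
    rewrite /v adjD adjZ !adj_delta mulmxDl !mulmxDr -!scalemxAl -!scalemxAr.
    rewrite !mul_delta_mx_cond !eqxx (negbTE nxy) eq_sym (negbTE nxy) !mulr0n !mulr1n.
    rewrite !scaler0 !addE !sclE !mxE !eqxx /= conjCi.
    have Hii : 'i * 'i = -1 :> C by rewrite -expr2 sqrCi.
    rewrite mulr1 mulNr Hii opprK addr0 add0r.

    by [].

  have := H v; rewrite Nv pnatr_eq0 /= => /(_ isT).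
  rewrite tr_quad /v adjD adjZ !adj_delta !(mulmxDl, mulmxDr, addE) -!scalemxAl -!scalemxAr.
  rewrite  !sclE !entry_delta !Hd conjCi => /eqP.
  rewrite -subr_eq0 => /eqP E.
  have : 'i * (X x y - X y x) = 0.
    have Hii : 'i * 'i = -1 :> C by rewrite -expr2 sqrCi.
    rewrite -{}[RHS]E !mulNr (mulrA 'i 'i) Hii; ring.
  by move/eqP; rewrite mulf_eq0 (negbTE (neq0Ci C)) /= => /eqP.
apply/matrixP => a b; rewrite !mxE.
case: (eqVneq a b) => [<-|nab]; first by rewrite mulr1n Hd.
rewrite mulr0n.
have h1 := Hs a b nab; have h2 := Hi a b nab.
have : 2 * X a b = 0.
  rewrite -[RHS](addr0 0) -{1}h1 -{1}h2; ring.
by move/eqP; rewrite mulf_eq0 pnatr_eq0 /= => /eqP.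
Qed.
End Trc.
Section GS.
Variable C : numClosedFieldType.
Variables (a s : nat) (i0 : 'I_s).
Implicit Types (w u : 'M[C]_(a, s)).

Lemma sum_delta_scal m (al : nat -> C) (j : nat) : (j < m)%N ->
  \sum_(i < m) al i *: ((j == i)%:R%:M : 'M[C]_s) = (al j)%:M.
Proof.
move=> hj; rewrite (bigD1 (Ordinal hj)) //= eqxx scale_scalar_mx mulr1.
rewrite big1 ?addr0 // => i /= ne.
have -> : (j == i) = false.
  by apply/negbTE; apply: contra ne => /eqP e; apply/eqP/val_inj => /=.
by rewrite scale_scalar_mx mulr0 raddf0.
Qed.

Lemma GS_aux (ws0 : seq 'M[C]_(a, s)) :
  {in ws0 &, forall u w, sc (adj u *m w)} ->
  forall ws1 : seq 'M[C]_(a, s), {subset ws1 <= ws0} ->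
  exists m (Y : nat -> 'M[C]_(a, s)),
   [/\ (forall i j, (i < m)%N -> (j < m)%N -> adj (Y i) *m Y j = (i == j)%:R%:M),
       (forall i, (i < m)%N -> {in ws0, forall w, sc (adj (Y i) *m w)}) &
       {in ws1, forall w, exists c : nat -> C, w = \sum_(i < m) c i *: Y i}].
Proof.
move=> H0 ws1; elim: ws1 => [|w ws1 IH] sub.
  by exists 0%N, (fun _ => 0); split => // i.
have wIn : w \in ws0 by apply: sub; rewrite inE eqxx.
have [m [Y [ON Sc Sp]]] : exists m (Y : nat -> 'M[C]_(a, s)),
   [/\ (forall i j, (i < m)%N -> (j < m)%N -> adj (Y i) *m Y j = (i == j)%:R%:M),
       (forall i, (i < m)%N -> {in ws0, forall w, sc (adj (Y i) *m w)}) &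
       {in ws1, forall w, exists c : nat -> C, w = \sum_(i < m) c i *: Y i}].
  by apply: IH => x xin; apply: sub; rewrite inE xin orbT.
pose al i := (adj (Y i) *m w) i0 i0.
pose w' := w - \sum_(i < m) al i *: Y i.
have fY : forall j, (j < m)%N -> adj (Y j) *m w' = 0.
  move=> j hj; rewrite /w' mulmxBr mulmx_sumr.
  under eq_bigr do rewrite -scalemxAr ON //.
  by rewrite sum_delta_scal // /al -scE ?subrr //; apply: Sc.
have adjw' : adj w' = adj w - \sum_(i < m) (al i)^* *: adj (Y i).
  by rewrite /w' adjB adj_sum; congr (_ - _); apply: eq_bigr => i _; rewrite adjZ.
have scw' : {in ws0, forall w2, sc (adj w' *m w2)}.
  move=> w2 w2in; rewrite adjw' mulmxBl mulmx_suml; apply: scB; first exact: H0.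
  by apply: sc_sum => i; rewrite -scalemxAl; apply: scZ; apply: Sc.
have w'w' : adj w' *m w' = adj w' *m w.
  rewrite {2}/w' mulmxBr mulmx_sumr big1 ?subr0 // => i _.
  by rewrite -scalemxAr -[Y i]adjK -adj_mul fY // adj0 scaler0.
pose mu := (adj w' *m w') i0 i0.
have Emu : adj w' *m w' = mu%:M by rewrite /mu -scE // w'w'; apply: scw'.
have mu0 : 0 <= mu.
  by rewrite /mu mxE sumr_ge0 // => k _; rewrite mxE mulrC mul_conjC_ge0.
have wdec : w = w' + \sum_(i < m) al i *: Y i by rewrite /w' subrK.
case: (eqVneq mu 0) => [mueq|mune].
  have w'0 : w' = 0 by apply: adj_self_eq0; rewrite Emu mueq raddf0.
  exists m, Y; split => // w2; rewrite inE => /orP [/eqP ->|w2in]; last exact: Sp.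
  by exists al; rewrite wdec w'0 add0r.
pose r := sqrtC mu.
have r0 : 0 < r by rewrite sqrtC_gt0 lt_def mune mu0.
have rr : r * r = mu by rewrite -expr2 sqrtCK.
pose ri := r^-1.
have ric : ri^* = ri by apply: geC0_conj; rewrite invr_ge0 ltW.
pose Yn := ri *: w'.
pose Y' := fun i => if i == m then Yn else Y i.
have Y'old : forall i, (i < m)%N -> Y' i = Y i by move=> i hi; rewrite /Y' ltn_eqF.
have Y'new : Y' m = Yn by rewrite /Y' eqxx.
have YnYn : adj Yn *m Yn = 1%:M.
  rewrite /Yn adjZ -scalemxAl -scalemxAr Emu ric !scale_scalar_mx -rr.
  by rewrite /ri; congr (_ %:M); field; rewrite gt_eqF.
have YnY : forall j, (j < m)%N -> adj Yn *m Y j = 0.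
  by move=> j hj; rewrite /Yn adjZ -scalemxAl -[Y j]adjK -adj_mul fY // adj0 scaler0.
have YYn : forall j, (j < m)%N -> adj (Y j) *m Yn = 0.
  by move=> j hj; rewrite /Yn -scalemxAr fY // scaler0.
exists m.+1, Y'; split.
- have Hc : forall k, (k < m.+1)%N -> k = m \/ (k < m)%N.
    by move=> k; rewrite ltnS leq_eqVlt => /orP [/eqP ->|->]; [left|right].
  move=> i j /Hc [->|hi] /Hc [->|hj].
  + by rewrite Y'new YnYn eqxx.
  + by rewrite Y'new Y'old // YnY // (gtn_eqF hj) raddf0.
  + by rewrite Y'new Y'old // YYn // (ltn_eqF hi) raddf0.
  + by rewrite !Y'old // ON.
- move=> i; rewrite ltnS leq_eqVlt => /orP [/eqP ->|hi] w2 w2in.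
    by rewrite Y'new /Yn adjZ -scalemxAl; apply: scZ; apply: scw'.
  by rewrite Y'old //; apply: Sc.
- move=> w2; rewrite inE => /orP [/eqP ->|w2in].
    exists (fun i => if i == m then r else al i).
    rewrite big_ord_recr /= eqxx Y'new /Yn scalerA mulfV ?gt_eqF // scale1r.
    rewrite addrC {1}wdec; congr (_ + _); apply: eq_bigr => i _.
    by rewrite /= ltn_eqF // Y'old.
  have [c ->] := Sp w2 w2in.
  exists (fun i => if i == m then 0 else c i).
  rewrite big_ord_recr /= eqxx scale0r addr0; apply: eq_bigr => i _.
  by rewrite /= ltn_eqF // Y'old.
Qed.

Lemma GS (ws : seq 'M[C]_(a, s)) :
  {in ws &, forall u w, sc (adj u *m w)} ->
  exists m (Y : nat -> 'M[C]_(a, s)),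
   (forall i j, (i < m)%N -> (j < m)%N -> adj (Y i) *m Y j = (i == j)%:R%:M) /\
   {in ws, forall w, exists c : nat -> C, w = \sum_(i < m) c i *: Y i}.
Proof.
move=> H; have [m [Y [ON _ Sp]]] := GS_aux H (fun x (h : x \in ws) => h).
by exists m, Y.
Qed.

End GS.
Section Recovery.
Variable C : numClosedFieldType.
Variables (a s : nat) (i0 : 'I_s).

Lemma recovery m (Y : nat -> 'M[C]_(a, s)) :
  (forall i j, (i < m)%N -> (j < m)%N -> adj (Y i) *m Y j = (i == j)%:R%:M) ->
  exists R : ('I_m + 'I_a)%type -> 'M[C]_(s, a),
    \sum_J adj (R J) *m R J = 1%:M /\
    forall w, (exists c : nat -> C, w = \sum_(i < m) c i *: Y i) -> forall J, sc (R J *m w).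
Proof.
move=> ON.
pose Pi := \sum_(i < m) Y i *m adj (Y i).
have PiY : forall j, (j < m)%N -> Pi *m Y j = Y j.
  move=> j hj; rewrite /Pi mulmx_suml.
  under eq_bigr do rewrite -mulmxA ON // mul_mx_scalar.
  rewrite (bigD1 (Ordinal hj)) //= eqxx scale1r big1 ?addr0 // => i /= ne.
  have -> : (i == j :> nat) = false.
    by apply/negbTE; apply: contra ne => /eqP e; apply/eqP/val_inj.
  by rewrite scale0r.
have adjPi : adj Pi = Pi.
  by rewrite /Pi adj_sum; apply: eq_bigr => i _; rewrite adj_mul adjK.
have PiPi : Pi *m Pi = Pi.
  rewrite {1}/Pi mulmx_suml; apply: eq_bigr => i _.
  by rewrite -mulmxA -{1}adjPi -adj_mul PiY.
pose R := fun J : ('I_m + 'I_a)%type => match J with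
  | inl i => adj (Y i)
  | inr x => delta_mx i0 x *m (1%:M - Pi) end.
exists R; split.
  rewrite big_sumType /=.
  have -> : \sum_(i < m) adj (adj (Y i)) *m adj (Y i) = Pi.
    by apply: eq_bigr => i _; rewrite adjK.
  have -> : \sum_(x < a) adj (delta_mx i0 x *m (1%:M - Pi)) *m (delta_mx i0 x *m (1%:M - Pi))
           = 1%:M - Pi.
    under eq_bigr => x _ do rewrite adj_mul adj_delta !mulmxA -(mulmxA _ (delta_mx x i0)) mul_delta_mx.
    rewrite -mulmx_suml -mulmx_sumr.
    have -> : \sum_(x < a) delta_mx x x = 1%:M :> 'M[C]_a.
      by rewrite (scalar_mx_sum_delta a 1); apply: eq_bigr => i _; rewrite scale1r.
    rewrite mulmx1 adjB adjPi.
    have -> : adj (1%:M : 'M[C]_a) = 1%:M by apply/matrixP => i j; rewrite !mxE rmorphMn /= conjC1 eq_sym.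
    rewrite mulmxBl !mulmxBr mul1mx mulmx1 PiPi.
    by rewrite mul1mx subrr subr0.
  by rewrite addrC subrK.
move=> w [c ->] [i|x] /=.
  rewrite mulmx_sumr; apply: sc_sum => j.
  by rewrite -scalemxAr ON //; apply: scZ; apply: sc_scalar.
rewrite -mulmxA.
have -> : (1%:M - Pi) *m \sum_(i < m) c i *: Y i = 0.
  rewrite mulmxBl mul1mx mulmx_sumr.
  rewrite [X in _ - X](eq_bigr (fun i : 'I_m => c i *: Y i)) ?subrr // => i _.
  by rewrite -scalemxAr PiY.
by rewrite mulmx0; apply: sc0.
Qed.
End Recovery.
Section Rank1.
Variable C : numClosedFieldType.
Ltac cring := match goal with |- ?a = ?b => change (@eq C a b); ring end.

Lemma sum3_swap (I J K : finType) (F : I -> J -> K -> C) :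
  \sum_i \sum_j \sum_k F i j k = \sum_j \sum_k \sum_i F i j k.
Proof. rewrite exchange_big; apply: eq_bigr => j _; exact: exchange_big. Qed.

Lemma sum_prod (I J : finType) (f : I -> C) (g : J -> C) :
  \sum_i \sum_j f i * g j = (\sum_i f i) * (\sum_j g j).
Proof. by rewrite mulr_suml; apply: eq_bigr => i _; rewrite mulr_sumr. Qed.

Lemma rank1_scalar (I J : finType) (U : I -> J -> C) (V : J -> C) :
  (forall a b, \sum_k U k a * (U k b)^* = V a * (V b)^*) ->
  forall NN (p : I -> C), NN = \sum_i (V i)^* * V i ->
  (forall k, p k = \sum_i (V i)^* * U k i) ->
  forall k b, NN * U k b = p k * V b.
Proof.
move=> H' NN p eN ep.
have Nc : NN^* = NN by apply: geC0_conj; rewrite eN sumr_ge0 // => i _; rewrite mulrC mul_conjC_ge0.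
have pc : forall k, (p k)^* = \sum_i V i * (U k i)^*.
  by move=> k; rewrite ep rmorph_sum; apply: eq_bigr => i _; rewrite rmorphM /= conjCK.
have S1 : \sum_k \sum_b U k b * (U k b)^* = NN.
  rewrite eN exchange_big; apply: eq_bigr => b _; rewrite H' mulrC //.
have S2 : \sum_k \sum_b U k b * (p k)^* * (V b)^* = NN * NN.
  transitivity (\sum_k \sum_b \sum_a U k b * V a * (U k a)^* * (V b)^*).
    apply: eq_bigr => k _; apply: eq_bigr => b _; rewrite pc mulr_sumr mulr_suml.
    by apply: eq_bigr => a _; cring.
  rewrite eN sum3_swap -sum_prod; apply: eq_bigr => b _.
  apply: eq_bigr => a _.
  transitivity (\sum_k V a * (V b)^* * (U k b * (U k a)^*)).
    by apply: eq_bigr => k _; cring.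
  by rewrite -mulr_sumr H'; cring.
have S3 : \sum_k \sum_b p k * V b * (U k b)^* = NN * NN.
  transitivity (\sum_k \sum_b \sum_a (V a)^* * U k a * V b * (U k b)^*).
    apply: eq_bigr => k _; apply: eq_bigr => b _; rewrite ep mulr_suml mulr_suml.
    by apply: eq_bigr => a _.
  rewrite eN sum3_swap -sum_prod; apply: eq_bigr => b _.
  apply: eq_bigr => a _.
  transitivity (\sum_k (V a)^* * V b * (U k a * (U k b)^*)).
    by apply: eq_bigr => k _; cring.
  by rewrite -mulr_sumr H'; cring.
have S4 : \sum_k \sum_b p k * (p k)^* * (V b * (V b)^*) = NN * (NN * NN).
  transitivity ((\sum_k p k * (p k)^*) * NN).
    rewrite mulr_suml; apply: eq_bigr => k _; rewrite -mulr_sumr; congr (_ * _).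
    by rewrite eN; apply: eq_bigr => b _; rewrite mulrC.
  rewrite mulrC; congr (_ * _).
  transitivity (\sum_k \sum_a \sum_a' (V a)^* * V a' * (U k a * (U k a')^*)).
    apply: eq_bigr => k _; rewrite pc ep -sum_prod.
    by apply: eq_bigr => a _; apply: eq_bigr => a' _; cring.
  rewrite eN sum3_swap -sum_prod; apply: eq_bigr => a _; apply: eq_bigr => a' _.
  by rewrite -mulr_sumr H'; cring.
have Z : \sum_k \sum_b (NN * U k b - p k * V b) * (NN * U k b - p k * V b)^* = 0.
  transitivity (NN * NN * (\sum_k \sum_b U k b * (U k b)^*)
     - NN * (\sum_k \sum_b U k b * (p k)^* * (V b)^*)
     - NN * (\sum_k \sum_b p k * V b * (U k b)^*)
     + \sum_k \sum_b p k * (p k)^* * (V b * (V b)^*)).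
    rewrite !mulr_sumr -!sumrB -big_split /=; apply: eq_bigr => k _.
    rewrite !mulr_sumr -!sumrB -big_split /=; apply: eq_bigr => b _.
    rewrite rmorphB !rmorphM /= Nc; cring.
  rewrite S1 S2 S3 S4; cring.
move=> k b.
have Hz := psumr_eq0P (fun k _ => sumr_ge0 _ (fun b _ => mul_conjC_ge0 _)) Z (i := k) isT.
have := psumr_eq0P (fun b _ => mul_conjC_ge0 _) Hz (i := b) isT.
by move/eqP; rewrite mul_conjC_eq0 subr_eq0 => /eqP.
Qed.

Lemma rank1 N (I : finType) (u : I -> 'cV[C]_N) (v : 'cV[C]_N) :
  \sum_k u k *m adj (u k) = v *m adj v ->
  forall k b, (adj v *m v) 0 0 * u k b 0 = (adj v *m u k) 0 0 * v b 0.
Proof.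
move=> H k b; rewrite !inner_entry.
have HH : forall a b', \sum_k u k a 0 * (u k b' 0)^* = v a 0 * (v b' 0)^*.
  move=> a b'; have := congr1 (fun X : 'M[C]_N => X a b') H.
  by rewrite summxE outer_entry /= => <-; apply: eq_bigr => k' _; rewrite outer_entry.
exact: (@rank1_scalar I 'I_N (fun k b => u k b 0) (fun b => v b 0) HH _
  (fun k => \sum_i (v i 0)^* * u k i 0) erefl (fun k => erefl) k b).
Qed.

End Rank1.
From Stdlib Require Import FunctionalExtensionality.
Section Conv.
Variable C : numClosedFieldType.

Lemma big_enum (R : Type) (idx : R) (op : Monoid.com_law idx) (T : finType) (F : T -> R) :
  \big[op/idx]_(x : T) F x = \big[op/idx]_(i < #|T|) F (enum_val i).
Proof.
rewrite (reindex (@enum_val T T)) //=.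
exact: onW_bij (enum_val_bij T).
Qed.

Definition toM (I J : finType) (X : op C I J) : 'M[C]_(#|I|, #|J|) :=
  \matrix_(i, j) X (enum_val i) (enum_val j).
Definition ofM (I J : finType) (A : 'M[C]_(#|I|, #|J|)) : op C I J :=
  fun x y => A (enum_rank x) (enum_rank y).

Lemma ofMK (I J : finType) (A : 'M[C]_(#|I|, #|J|)) : toM (ofM A) = A.
Proof. by apply/matrixP => i j; rewrite mxE /ofM !enum_valK. Qed.

Lemma toMK (I J : finType) (X : op C I J) : ofM (toM X) = X.
Proof.
apply: functional_extensionality => x; apply: functional_extensionality => y.
by rewrite /ofM mxE !enum_rankK.
Qed.

Lemma toM_inj (I J : finType) (X Y : op C I J) : toM X = toM Y -> X = Y.
Proof. by move=> h; rewrite -(toMK X) h toMK. Qed.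

Lemma toM_mul (I J K : finType) (A : op C I J) (B : op C J K) :
  toM (mulop A B) = toM A *m toM B.
Proof.
apply/matrixP => i k; rewrite !mxE /mulop big_enum.
by apply: eq_bigr => j _; rewrite !mxE.
Qed.

Lemma toM_adj (I J : finType) (A : op C I J) : toM (adjop A) = adj (toM A).
Proof. by apply/matrixP => i j; rewrite !mxE. Qed.

Lemma toM_sum (I J K : finType) (F : K -> op C I J) :
  toM (fun x y => \sum_k F k x y) = \sum_k toM (F k).
Proof.
by apply/matrixP => i j; rewrite mxE summxE; apply: eq_bigr => k _; rewrite mxE.
Qed.

Lemma trop_toM (I : finType) (X : op C I I) : trop X = \tr (toM X).
Proof. by rewrite /trop /mxtrace big_enum; apply: eq_bigr => i _; rewrite mxE. Qed.

Lemma toM_delta (I : finType) : toM (fun x y : I => (x == y)%:R) = 1%:M :> 'M[C]_#|I|.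
Proof.
apply/matrixP => i j; rewrite !mxE (inj_eq enum_val_inj).
by case: (i == j).
Qed.

Lemma channel_mx (I J : finType) (Phi : op C I I -> op C J J) : channel Phi ->
  exists m (K : 'I_m -> 'M[C]_(#|J|, #|I|)),
    \sum_k adj (K k) *m K k = 1%:M /\
    forall X, toM (Phi X) = \sum_k K k *m toM X *m adj (K k).
Proof.
move=> [m [K [Hc Hphi]]]; exists m, (fun k => toM (K k)); split.
  have -> : \sum_k adj (toM (K k)) *m toM (K k) =
     toM (fun i i' => \sum_(k < m) mulop (adjop (K k)) (K k) i i').
    by rewrite toM_sum; apply: eq_bigr => k _; rewrite toM_mul toM_adj.
  have -> : (fun i i' => \sum_(k < m) mulop (adjop (K k)) (K k) i i') = (fun i i' => (i == i')%:R).
    by apply: functional_extensionality => i; apply: functional_extensionality => i'.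
  exact: toM_delta.
move=> X.
have -> : Phi X = (fun a b => \sum_(k < m) mulop (mulop (K k) X) (adjop (K k)) a b).
  by apply: functional_extensionality => a; apply: functional_extensionality => b.
by rewrite toM_sum; apply: eq_bigr => k _; rewrite !toM_mul toM_adj.
Qed.

Lemma mk_channel (I J L : finType) (R : L -> 'M[C]_(#|J|, #|I|)) :
  \sum_l adj (R l) *m R l = 1%:M ->
  exists Phi : op C I I -> op C J J, channel Phi /\
    forall X, toM (Phi X) = \sum_l R l *m toM X *m adj (R l).
Proof.
move=> HR.
pose K := fun k : 'I_#|L| => (ofM (R (enum_val k)) : op C J I).
exists (fun X a b => \sum_(k < #|L|) mulop (mulop (K k) X) (adjop (K k)) a b); split.
  exists #|L|, K; split => //.
  move=> i i'.
  have E : (fun i i' => \sum_(k < #|L|) mulop (adjop (K k)) (K k) i i') = (fun x y : I => (x == y)%:R).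
    apply: toM_inj; rewrite toM_delta -HR toM_sum [RHS]big_enum.
    by apply: eq_bigr => k _; rewrite toM_mul toM_adj ofMK.
  exact: (congr1 (fun f => f i i') E).
move=> X; rewrite toM_sum [RHS]big_enum.
by apply: eq_bigr => k _; rewrite !toM_mul toM_adj ofMK.
Qed.

End Conv.
Section PT.
Variable C : numClosedFieldType.
Variables (n : nat) (S : 'I_n -> finType).

Lemma restr_eqE (P : {set 'I_n}) (x y : joint S) :
  (restr P x == restr P y) = [forall j, (j \in P) ==> (x j == y j)].
Proof.
apply/eqP/forallP => [H j|H].
  apply/implyP => jP.
  have := congr1 (fun f : red S P => f (exist _ j jP)) H.
  by rewrite !ffunE /= => ->.
apply/ffunP => [[j jP]]; rewrite !ffunE /=.
by apply/eqP; exact: (implyP (H j) jP).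
Qed.

Lemma restr_inj (P Q : {set 'I_n}) (x y : joint S) :
  (forall j, (j \in P) || (j \in Q)) ->
  restr P x = restr P y -> restr Q x = restr Q y -> x = y.
Proof.
move=> HPQ /eqP; rewrite restr_eqE => /forallP HP /eqP; rewrite restr_eqE => /forallP HQ.
apply/ffunP => j; have := HPQ j; case/orP => hj.
  by apply/eqP; exact: (implyP (HP j) hj).
by apply/eqP; exact: (implyP (HQ j) hj).
Qed.

Definition Tf (P Q : {set 'I_n}) (w : red S Q) : op C (red S P) (joint S) :=
  fun a x => ((restr P x == a) && (restr Q x == w))%:R.
Arguments Tf P Q w : clear implicits.

Lemma sum3_rev (I J K : finType) (F : I -> J -> K -> C) :
  \sum_i \sum_j \sum_k F i j k = \sum_k \sum_j \sum_i F i j k.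
Proof.
under eq_bigr do rewrite exchange_big.
rewrite exchange_big; apply: eq_bigr => k _; exact: exchange_big.
Qed.

Lemma sum_ind2 (T : finType) (u v : T) :
  \sum_w ((u == w) && (v == w))%:R = (u == v)%:R :> C.
Proof.
rewrite (bigD1 u) //= eqxx /= big1 ?addr0 => [|w /negbTE nw]; first by rewrite eq_sym.
by rewrite eq_sym nw.
Qed.

Lemma ptrace_kraus (P Q : {set 'I_n}) (HQ : forall j, (j \in Q) = (j \notin P))
  (X : op C (joint S) (joint S)) :
  @ptrace C n S P X = fun a b => \sum_w mulop (mulop (Tf P Q w) X) (adjop (Tf P Q w)) a b.
Proof.
apply: functional_extensionality => a; apply: functional_extensionality => b.
rewrite /ptrace /mulop /adjop /Tf.
transitivity (\sum_x \sum_y \sum_w ((restr P x == a) && (restr Q x == w))%:R * X x y *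
                 ((restr P y == b) && (restr Q y == w))%:R); last first.
  rewrite sum3_rev.
  apply: eq_bigr => w _; apply: eq_bigr => y _; rewrite mulr_suml rmorph_nat.
  by apply: eq_bigr.
apply: eq_bigr => x _; apply: eq_bigr => y _.
have -> : [forall j, (j \notin P) ==> (x j == y j)] = (restr Q x == restr Q y).
  by rewrite restr_eqE; apply: eq_forallb => j; rewrite HQ.
transitivity (((restr P x == a) && (restr P y == b))%:R * X x y *
   \sum_w ((restr Q x == w) && (restr Q y == w))%:R); last first.
  rewrite mulr_sumr; apply: eq_bigr => w _.
  by case: (restr P x == a); case: (restr P y == b); case: (restr Q x == w);
     case: (restr Q y == w); rewrite /= ?mulr0 ?mul0r ?mulr1 ?mul1r.
rewrite sum_ind2.
by case: (restr P x == a); case: (restr P y == b); case: (restr Q x == restr Q y);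
   rewrite /= ?mulr0 ?mul0r ?mulr1 ?mul1r.
Qed.

Lemma Tf_complete (P Q : {set 'I_n}) (HPQ : forall j, (j \in P) || (j \in Q)) :
  (fun x y => \sum_w mulop (adjop (Tf P Q w)) (Tf P Q w) x y) = (fun x y : joint S => (x == y)%:R).
Proof.
apply: functional_extensionality => x; apply: functional_extensionality => y.
rewrite /mulop /adjop /Tf.
transitivity (\sum_w \sum_a ((restr P x == a) && (restr P y == a))%:R *
                 ((restr Q x == w) && (restr Q y == w))%:R :> C).
  apply: eq_bigr => w _; apply: eq_bigr => a _; rewrite rmorph_nat.
  by case: (restr P x == a); case: (restr P y == a); case: (restr Q x == w);
     case: (restr Q y == w); rewrite /= ?mulr0 ?mul0r ?mulr1 ?mul1r.
rewrite exchange_big /=.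
under eq_bigr do rewrite -mulr_sumr sum_ind2.
rewrite -mulr_suml sum_ind2.
case: eqP => [ex|nx]; case: eqP => [ey|ny]; rewrite ?mulr1 ?mul1r ?mulr0 ?mul0r.
- by rewrite (restr_inj HPQ ex ey) eqxx.
- by case: eqP => // exy; case: ny; rewrite exy.
- by case: eqP => // exy; case: nx; rewrite exy.
- by case: eqP => // exy; case: nx; rewrite exy.
Qed.

Lemma ptrace_tr (P Q : {set 'I_n}) (HP : forall j, (j \in P) = (j \notin Q))
  (X : op C (joint S) (joint S)) (a a' : red S Q) :
  @ptrace C n S Q X a a' = trop (mulop (mulop (Tf P Q a) X) (adjop (Tf P Q a'))).
Proof.
rewrite /ptrace /trop /mulop /adjop /Tf.
transitivity (\sum_x \sum_y \sum_r ((restr P x == r) && (restr Q x == a))%:R * X x y *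
                 ((restr P y == r) && (restr Q y == a'))%:R); last first.
  rewrite sum3_rev.
  apply: eq_bigr => r _; apply: eq_bigr => y _; rewrite mulr_suml rmorph_nat.
  by apply: eq_bigr.
apply: eq_bigr => x _; apply: eq_bigr => y _.
have -> : [forall j, (j \notin Q) ==> (x j == y j)] = (restr P x == restr P y).
  by rewrite restr_eqE; apply: eq_forallb => j; rewrite HP.
transitivity (((restr Q x == a) && (restr Q y == a'))%:R * X x y *
   \sum_r ((restr P x == r) && (restr P y == r))%:R); last first.
  rewrite mulr_sumr; apply: eq_bigr => r _.
  by case: (restr P x == r); case: (restr P y == r); case: (restr Q x == a);
     case: (restr Q y == a'); rewrite /= ?mulr0 ?mul0r ?mulr1 ?mul1r.
rewrite sum_ind2.
by case: (restr Q x == a); case: (restr Q y == a'); case: (restr P x == restr P y);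
   rewrite /= ?mulr0 ?mul0r ?mulr1 ?mul1r.
Qed.

End PT.
Arguments Tf {C n S} P Q w.
Section Gen.
Variable C : numClosedFieldType.

Lemma rk1_density (I : finType) (c : C) (v : 'cV[C]_#|I|) :
  0 <= c -> c * (adj v *m v) 0 0 = 1 -> density (ofM (c *: (v *m adj v))).
Proof.
move=> c0 hc; split.
  move=> w; rewrite /ofM.
  pose z := \sum_y (v (enum_rank y) 0)^* * w y.
  rewrite (_ : \sum_i \sum_j _ = c * ((\sum_x (w x)^* * v (enum_rank x) 0) * z)); last first.
    rewrite /z -sum_prod mulr_sumr; apply: eq_bigr => x _.
    rewrite mulr_sumr; apply: eq_bigr => y _.
    rewrite sclE outer_entry; ring.
  have -> : \sum_x (w x)^* * v (enum_rank x) 0 = z^*.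
    rewrite /z rmorph_sum; apply: eq_bigr => x _; rewrite rmorphM /= conjCK mulrC //.
  by rewrite mulr_ge0 // mulrC mul_conjC_ge0.
rewrite trop_toM ofMK mxtraceZ mxtrace_mulC /mxtrace big_ord1.
exact: hc.
Qed.

Lemma big3_rev (R : Type) (idx : R) (op : Monoid.com_law idx) (I J K : finType) (F : I -> J -> K -> R) :
  \big[op/idx]_i \big[op/idx]_j \big[op/idx]_k F i j k = \big[op/idx]_k \big[op/idx]_j \big[op/idx]_i F i j k.
Proof.
under eq_bigr do rewrite exchange_big.
rewrite exchange_big; apply: eq_bigr => k _; exact: exchange_big.
Qed.

Lemma comp3 (I1 I2 I3 : finType) a b c d (L : I1 -> 'M[C]_(a, b)) (T : I2 -> 'M[C]_(b, c))
  (K : I3 -> 'M[C]_(c, d)) (X : 'M[C]_d) :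
  \sum_l L l *m (\sum_w T w *m (\sum_k K k *m X *m adj (K k)) *m adj (T w)) *m adj (L l)
  = \sum_(q : (I1 * I2) * I3) (L q.1.1 *m T q.1.2 *m K q.2) *m X *m adj (L q.1.1 *m T q.1.2 *m K q.2).
Proof.
transitivity (\sum_l \sum_w \sum_k (L l *m T w *m K k) *m X *m adj (L l *m T w *m K k)); last first.
  by rewrite pair_bigA /= pair_bigA /=.
apply: eq_bigr => l _.
rewrite mulmx_sumr mulmx_suml; apply: eq_bigr => w _.
rewrite !(mulmx_sumr, mulmx_suml); apply: eq_bigr => k _.
by rewrite !adj_mul !mulmxA.
Qed.

Lemma chain3 (I1 I2 I3 : finType) a b c d (L : I1 -> 'M[C]_(a, b)) (T : I2 -> 'M[C]_(b, c))
  (K : I3 -> 'M[C]_(c, d)) :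
  \sum_l adj (L l) *m L l = 1%:M -> \sum_w adj (T w) *m T w = 1%:M ->
  \sum_k adj (K k) *m K k = 1%:M ->
  \sum_(q : (I1 * I2) * I3) adj (L q.1.1 *m T q.1.2 *m K q.2) *m (L q.1.1 *m T q.1.2 *m K q.2)
   = 1%:M.
Proof.
move=> HL HT HK.
transitivity (\sum_l \sum_w \sum_k adj (L l *m T w *m K k) *m (L l *m T w *m K k)).
  by rewrite pair_bigA /= pair_bigA /=.
rewrite big3_rev -HK; apply: eq_bigr => k _.
transitivity (\sum_w adj (K k) *m (adj (T w) *m (\sum_l adj (L l) *m L l) *m T w) *m K k).
  apply: eq_bigr => w _; rewrite !(mulmx_sumr, mulmx_suml).
  by apply: eq_bigr => l _; rewrite !adj_mul !mulmxA.
rewrite HL; under eq_bigr do rewrite mulmx1.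
by rewrite -mulmx_suml -mulmx_sumr HT mulmx1.
Qed.

Lemma SC_id s (i0 : 'I_s) (I : finType) (M : I -> 'M[C]_s) (X : 'M[C]_s) :
  (forall p, sc (M p)) -> \sum_p adj (M p) *m M p = 1%:M ->
  \sum_p M p *m X *m adj (M p) = X.
Proof.
move=> Hs H1.
have EM : forall p, M p = (M p i0 i0)%:M by move=> p; apply: scE.
have H1' : \sum_p (M p i0 i0)^* * M p i0 i0 = 1.
  have := congr1 (fun A : 'M[C]_s => A i0 i0) H1; rewrite summxE mxE eqxx mulr1n => <-.
  apply: eq_bigr => p _; move: (EM p); set c := M p i0 i0 => ->.
  by rewrite adj_scalar -scalar_mxM mxE eqxx mulr1n.
transitivity (\sum_p ((M p i0 i0)^* * M p i0 i0) *: X).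
  apply: eq_bigr => p _; move: (EM p); set c := M p i0 i0 => ->.
  rewrite adj_scalar mul_scalar_mx -scalemxAl mul_mx_scalar.
  by rewrite scalerA mulrC.
by rewrite -scaler_suml H1' scale1r.
Qed.

End Gen.
Section Main.
Variables (C : numClosedFieldType) (n : nat) (S : 'I_n -> finType) (Sec : finType).
Variable E : op C Sec Sec -> op C (joint S) (joint S).
Variables (m : nat) (K : 'I_m -> 'M[C]_(#|joint S|, #|Sec|)).
Hypothesis HKc : \sum_k adj (K k) *m K k = 1%:M.
Hypothesis HKE : forall X, toM (E X) = \sum_k K k *m toM X *m adj (K k).
Variable i0 : 'I_#|Sec|.

Lemma toM_ptrace (P Q : {set 'I_n}) (HQ : forall j, (j \in Q) = (j \notin P)) X :
  toM (@ptrace C n S P X) = \sum_w toM (Tf P Q w) *m toM X *m adj (toM (Tf P Q w)).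
Proof.
rewrite (ptrace_kraus HQ) toM_sum; apply: eq_bigr => w _.
by rewrite !toM_mul toM_adj.
Qed.

Lemma Tf_completeM (P Q : {set 'I_n}) (HPQ : forall j, (j \in P) || (j \in Q)) :
  \sum_w adj (toM (Tf P Q w)) *m toM (Tf P Q w) = 1%:M :> 'M[C]_#|joint S|.
Proof.
rewrite -(toM_delta C (joint S)) -(@Tf_complete C n S P Q HPQ) toM_sum.
by apply: eq_bigr => w _; rewrite toM_mul toM_adj.
Qed.

Lemma ptrace_trM (P Q : {set 'I_n}) (HP : forall j, (j \in P) = (j \notin Q)) X a a' :
  @ptrace C n S Q X a a' = \tr (toM (Tf P Q a) *m toM X *m adj (toM (Tf P Q a'))).
Proof. by rewrite (ptrace_tr HP) trop_toM !toM_mul toM_adj. Qed.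

Lemma auth_sc (P Q : {set 'I_n}) (HQ : forall j, (j \in Q) = (j \notin P)) :
  authorized E P -> forall k k' w w',
    sc (adj (toM (Tf P Q w) *m K k) *m (toM (Tf P Q w') *m K k')).
Proof.
move=> [D [chD HD]].
have [ml [L [HLc HLD]]] := channel_mx chD.
pose T := fun w : red S Q => toM (@Tf C n S P Q w).
pose M := fun q : ('I_ml * red S Q) * 'I_m => L q.1.1 *m T q.1.2 *m K q.2.
have HM : forall q, M q = (M q i0 i0)%:M.
  apply: kraus_id; apply: kraus_id_bridge => c v c0 hc.
  have dens := rk1_density c0 hc.
  have := HD _ dens.
  move=> H; have : D (ptrace (E (ofM (c *: (v *m adj v))))) = ofM (c *: (v *m adj v)).
    by apply: functional_extensionality => a; apply: functional_extensionality => b; apply: H.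
  move=> /(congr1 (fun X => toM X)); rewrite HLD (toM_ptrace HQ) HKE ofMK => E'.
  by rewrite -[RHS]E' comp3.
move=> k k' w w'.
have -> : adj (T w *m K k) *m (T w' *m K k') =
   \sum_l adj (M (l, w, k)) *m M (l, w', k').
  rewrite -[T w' *m K k']mul1mx -HLc !mulmx_suml mulmx_sumr; apply: eq_bigr => l _.
  by rewrite /M /= !adj_mul !mulmxA.
apply: sc_sum => l; apply: scM; last by rewrite HM; apply: sc_scalar.
by apply: sc_adj; rewrite HM; apply: sc_scalar.
Qed.

Lemma partA (P Q : {set 'I_n}) (HQ : forall j, (j \in Q) = (j \notin P)) :
  authorized E P -> unauthorized E Q.
Proof.
move=> auth.
have HP : forall j, (j \in P) = (j \notin Q) by move=> j; rewrite HQ negbK.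
suff H : forall rho, density rho -> forall a b,
    @ptrace C n S Q (E rho) a b = \sum_k (adj (toM (Tf P Q b) *m K k) *m (toM (Tf P Q a) *m K k)) i0 i0.
  by move=> rho sigma dr ds a b; rewrite !H.
move=> rho [_ tr1] a b.
rewrite (ptrace_trM HP) HKE mulmx_sumr mulmx_suml raddf_sum /=.
apply: eq_bigr => k _.
have -> : toM (Tf P Q a) *m (K k *m toM rho *m adj (K k)) *m adj (toM (Tf P Q b)) =
   (toM (Tf P Q a) *m K k *m toM rho) *m adj (toM (Tf P Q b) *m K k).
  by rewrite adj_mul !mulmxA.
rewrite mxtrace_mulC !mulmxA -(mulmxA (adj _)) (scE i0 (auth_sc HQ auth k k b a)).
by rewrite mul_scalar_mx mxtraceZ -trop_toM tr1 mulr1 [RHS]mxE eqxx mulr1n.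
Qed.

Lemma pure_struct (P0 : {set 'I_n}) : authorized E P0 -> pure_scheme E ->
  exists k0 (be : 'I_m -> C), be k0 = 1 /\ forall k, K k = be k *: K k0.
Proof.
move=> auth0 pure.
have HQ0 : forall j, (j \in ~: P0) = (j \notin P0) by move=> j; rewrite in_setC.
have HPQ : forall j, (j \in P0) || (j \in ~: P0) by move=> j; rewrite in_setC orbN.
pose mu k k' := (adj (K k) *m K k') i0 i0.
have hmu : forall k k', adj (K k) *m K k' = (mu k k')%:M.
  move=> k k'; apply: scE.
  rewrite -[K k']mul1mx -(Tf_completeM HPQ) !mulmx_suml mulmx_sumr.
  apply: sc_sum => w; move: (auth_sc HQ0 auth0 k k' w w).
  by rewrite adj_mul !mulmxA.
pose e : 'cV[C]_#|Sec| := delta_mx i0 0.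
pose rho0 : op C Sec Sec := ofM (1 *: (e *m adj e)).
have dens0 : density rho0 by apply: rk1_density; rewrite ?ler01 // mul1r delta_inner.
have pure0 : pure_state rho0.
  split => //; exists (fun x => e (enum_rank x) 0) => x y.
  by rewrite /rho0 /ofM sclE outer_entry mul1r.
have [_ [vf Hv]] := pure _ pure0.
pose vM : 'cV[C]_#|joint S| := \col_i vf (enum_val i).
have HE0 : toM (E rho0) = vM *m adj vM.
  by apply/matrixP => i j; rewrite outer_entry !mxE Hv.
pose u k := K k *m e.
have HU : \sum_k u k *m adj (u k) = vM *m adj vM.
  rewrite -HE0 HKE /rho0 ofMK scale1r; apply: eq_bigr => k _.
  by rewrite quad_eq.
have R1 := rank1 HU.
have hmu2 : forall k k', mu k k' = (adj (u k) *m u k') 0 0.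
  move=> k k'; rewrite /u adj_mul mulmxA -(mulmxA (adj e)) hmu mul_mx_scalar -scalemxAl.
  by rewrite sclE delta_inner mulr1.
have Hsum : \sum_k mu k k = 1.
  have := congr1 (fun A : 'M[C]_#|Sec| => A i0 i0) HKc.
  by rewrite summxE mxE eqxx mulr1n.
have N1 : (adj vM *m vM) 0 0 = 1.
  have T1 : \tr (vM *m adj vM) = (adj vM *m vM) 0 0 by rewrite mxtrace_mulC /mxtrace big_ord1.
  have T2 : \tr (\sum_k u k *m adj (u k)) = \sum_k mu k k.
    rewrite raddf_sum; apply: eq_bigr => k _.
    by rewrite /= mxtrace_mulC /mxtrace big_ord1 hmu2.
  by rewrite -T1 -HU T2 Hsum.
pose p k := (adj vM *m u k) 0 0.
have Hup : forall k b, u k b 0 = p k * vM b 0.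
  by move=> k b; rewrite -R1 N1 mul1r.
have hmu3 : forall k k', mu k k' = (p k)^* * p k'.
  move=> k k'; rewrite hmu2 inner_entry.
  under eq_bigr do rewrite !Hup rmorphM.
  transitivity ((p k)^* * p k' * (adj vM *m vM) 0 0); last by rewrite N1 mulr1.
  rewrite inner_entry mulr_sumr; apply: eq_bigr => b _; ring.
have [k0 hk0] : exists k0, p k0 != 0.
  case: (boolP [exists k, p k != 0]) => [/existsP //|].
  rewrite negb_exists => /forallP H0.
  have : \sum_k mu k k = 0.
    apply: big1 => k _; rewrite hmu3; move: (H0 k); rewrite negbK => /eqP ->.
    by rewrite mulr0.
  by rewrite Hsum => /eqP; rewrite oner_eq0.
exists k0, (fun k => p k / p k0); split; first by rewrite divff.
move=> k; apply/eqP; rewrite -subr_eq0; apply/eqP; apply: adj_self_eq0.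
rewrite adjB adjZ mulmxBl !mulmxBr -!scalemxAl -!scalemxAr !hmu !scale_scalar_mx.
rewrite -!raddfB !hmu3.
have -> : (p k)^* * p k - p k / p k0 * ((p k)^* * p k0) -
   ((p k / p k0)^* * ((p k0)^* * p k) - (p k / p k0)^* * (p k / p k0 * ((p k0)^* * p k0))) = 0.
  rewrite rmorphM /= fmorphV /=.
  have hc : (p k0)^* != 0 by rewrite conjC_eq0.
  by field; rewrite hk0.
by rewrite /= raddf0.
Qed.

Lemma partB (P0 Q R : {set 'I_n}) (HR : forall j, (j \in R) = (j \notin Q)) :
  pure_scheme E -> authorized E P0 -> unauthorized E Q -> authorized E R.
Proof.
move=> pure auth0 unauth.
have [k0 [be [b1 Hbe]]] := pure_struct auth0 pure.
have HQR : forall j, (j \in Q) = (j \notin R) by move=> j; rewrite HR negbK.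
have HRQ : forall j, (j \in R) || (j \in Q) by move=> j; rewrite HR orNb.
pose Ta := fun a : red S Q => toM (@Tf C n S R Q a).
pose W := fun a => Ta a *m K k0.
pose sb := \sum_k (be k)^* * be k.
have sb0 : sb != 0.
  rewrite lt0r_neq0 // /sb (bigD1 k0) //= b1 conjC1 mul1r.
  apply: (lt_le_trans ltr01); rewrite lerDl sumr_ge0 // => k _.
  by rewrite mulrC mul_conjC_ge0.
have Hdec : forall rho a a', @ptrace C n S Q (E rho) a a' =
    sb * \tr (adj (W a') *m W a *m toM rho).
  move=> rho a a'.
  rewrite (ptrace_trM HR) HKE mulmx_sumr mulmx_suml raddf_sum /= /sb mulr_suml.
  apply: eq_bigr => k _.
  have -> : toM (Tf R Q a) *m (K k *m toM rho *m adj (K k)) *m adj (toM (Tf R Q a')) =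
     ((be k)^* * be k) *: ((W a *m toM rho) *m adj (W a')).
    rewrite /W /Ta (Hbe k) adj_mul adjZ -!scalemxAl -!scalemxAr !scalerA !mulmxA.
    by rewrite -scalemxAl mulrC.
  by rewrite mxtraceZ mxtrace_mulC !mulmxA.
have Xsc : forall a a', sc (adj (W a') *m W a).
  move=> a a'.
  pose rho0 : op C Sec Sec := ofM (1 *: ((delta_mx i0 0 : 'cV[C]_#|Sec|) *m adj (delta_mx i0 0))).
  have dens0 : density rho0 by apply: rk1_density; rewrite ?ler01 // mul1r delta_inner.
  rewrite (trc (X := adj (W a') *m W a) (k := @ptrace C n S Q (E rho0) a a' / sb)); first exact: sc_scalar.
  apply: trc_bridge => c v c0 hc.
  have dens := rk1_density c0 hc.
  have := unauth _ _ dens dens0 a a'; rewrite Hdec ofMK => <-.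
  by rewrite mulrC mulKf.
have Hws : {in [seq W a | a <- enum (red S Q)] &, forall u w, sc (adj u *m w)}.
  by move=> u w /mapP [a _ ->] /mapP [a' _ ->]; exact: Xsc.
have [m' [Y [ON Sp]]] := GS i0 Hws.
have [R' [HRc HRsc]] := recovery i0 ON.
have [D [chD HD]] := mk_channel (I := red S R) (J := Sec) HRc.
exists D; split => // rho dens a b.
suff -> : D (ptrace (E rho)) = rho by [].
apply: toM_inj; rewrite HD (toM_ptrace HQR) HKE comp3 (SC_id i0) //.
  move=> [[J a'] k] /=; rewrite (Hbe k) -!scalemxAr; apply: scZ; rewrite -mulmxA.
  by apply: HRsc; apply: Sp; apply: map_f; exact: mem_enum.
exact: chain3 HRc (Tf_completeM HRQ) HKc.
Qed.

End Main.
Unset Implicit Arguments.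
From mathcomp Require Import zify.

Theorem lemma3 (C : numClosedFieldType) (n : nat) (S : 'I_n -> finType)
  (Sec : finType) (E : op C Sec Sec -> op C (joint S) (joint S)) (t z : nat) :
  (1 < #|Sec|)%N ->
  channel E ->
  (exists P : {set 'I_n}, authorized E P) ->
  (forall P : {set 'I_n}, (t <= #|P|)%N -> authorized E P) ->
  (forall t' : nat,
     (forall P : {set 'I_n}, (t' <= #|P|)%N -> authorized E P) -> (t <= t')%N) ->
  (forall P : {set 'I_n}, (#|P| <= z)%N -> unauthorized E P) ->
  (forall z' : nat,
     (forall P : {set 'I_n}, (#|P| <= z')%N -> unauthorized E P) -> (z' <= z)%N) ->
  (n <= t + z)%N /\ (pure_scheme E -> n = (t + z)%N).
Proof.
move=> hSec chE [P0 auth0] Ht Htmin Hz Hzmax.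
pose i0 : 'I_#|Sec| := Ordinal (ltnW hSec).
have [m [K [HKc HKE]]] := channel_mx chE.
have cardC : forall A : {set 'I_n}, (#|A| + #|~: A|)%N = n.
  by move=> A; rewrite cardsC card_ord.
have part1 : (n <= t + z)%N.
  case: (leqP t n) => htn; last by lia.
  suff : (n - t <= z)%N by lia.
  apply: Hzmax => Q hQ.
  apply: (partA HKE i0 (P := ~: Q)); first by move=> j; rewrite in_setC negbK.
  apply: Ht; have := cardC Q; lia.
split => // pure.
have hzn : (z <= n)%N.
  case: (leqP z n) => // hnz.
  have : (z.+1 <= z)%N.
    apply: Hzmax => P _; apply: Hz.
    by apply: leq_trans (max_card _) _; rewrite card_ord ltnW.
  by rewrite ltnn.
have : (t <= n - z)%N.
  apply: Htmin => P hP.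
  apply: (partB HKc HKE i0 (P0 := P0) (Q := ~: P)) => //.
    by move=> j; rewrite in_setC negbK.
  apply: Hz; have := cardC P; lia.
lia.
Qed.
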